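(* Let $R\subseteq S$ be a module-finite inclusion of normal $F$-finite domains of characteristic $p>0$ such that the induced extension of fraction fields $K\subseteq L$ is not separable, and let $e\ge1$. Then the only $\phi\in\mathrm{Hom}_R(R^{1/p^e},R)$ that extends to an element $\bar\phi\in\mathrm{Hom}_S(S^{1/p^e},S)$ (i.e. with $\bar\phi|_{R^{1/p^e}}=\phi$) is the zero map.
   Context: $R^{1/p^e}\subseteq S^{1/p^e}$ are the rings of $p^e$-th roots inside an algebraic closure of $L$. $F$-finite: Frobenius is finite. *)

(* Defs.v *)
From HB Require Import structures.
From mathcomp Require Import all_boot all_order all_algebra.
From mathcomp Require Import all_field.
Set Implicit Arguments. Unset Strict Implicit. Unset Printing Implicit Defensive.
Import Order.TTheory GRing.Theory.
Local Open Scope ring_scope.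

(* All rings live inside a fixed algebraically closed field Omega (which plays
   the role of an algebraic closure of L); subrings are predicates on Omega. *)
Section Defs.
Variable Omega : closedFieldType.

Definition is_subring (R : {pred Omega}) : Prop :=
  [/\ 1 \in R, forall x y, x \in R -> y \in R -> x - y \in R
    & forall x y, x \in R -> y \in R -> x * y \in R].

Definition fracf (R : {pred Omega}) : Omega -> Prop :=
  fun x => exists a b, [/\ a \in R, b \in R, b != 0 & x = a / b].

Definition integral_over (R : {pred Omega}) (x : Omega) : Prop :=
  exists q : {poly Omega}, [/\ q \is monic, q \is a polyOver R & root q x].

Definition normal_domain (R : {pred Omega}) : Prop :=
  forall x, fracf R x -> integral_over R x -> x \in R.

Definition fin_gen (R M : {pred Omega}) : Prop :=
  exists s : seq Omega, {subset s <= M} /\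
    forall y, y \in M -> exists r : 'I_(size s) -> Omega,
      (forall i, r i \in R) /\ y = \sum_(i < size s) r i * s`_i.

(* R^{1/q} = { x in Omega | x^q in R } *)
Definition root_ring (q : nat) (R : {pred Omega}) : {pred Omega} :=
  [pred x | x ^+ q \in R].

(* F-finite: Frobenius is finite, i.e. R^{1/p} is a finite R-module *)
Definition F_finite (p : nat) (R : {pred Omega}) : Prop :=
  fin_gen R (root_ring p R).

Definition separable_elt (K : Omega -> Prop) (x : Omega) : Prop :=
  exists q : {poly Omega},
    [/\ q != 0, (forall i, K q`_i), root q x & separable_poly q].

Definition separable_ext (K L : Omega -> Prop) : Prop :=
  forall x, L x -> separable_elt K x.

Definition is_hom (R A B : {pred Omega}) (phi : Omega -> Omega) : Prop :=
  [/\ forall x y, x \in A -> y \in A -> phi (x + y) = phi x + phi y,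
      forall r x, r \in R -> x \in A -> phi (r * x) = r * phi x
    & forall x, x \in A -> phi x \in B].

End Defs.

(* Main.v *)
Require Import Defs.
From HB Require Import structures.
From mathcomp Require Import all_boot all_order all_algebra all_field.
From mathcomp Require Import zify ring.
From Stdlib Require Import Classical.
Set Implicit Arguments. Unset Strict Implicit. Unset Printing Implicit Defensive.
Import GRing.Theory.
Local Open Scope ring_scope.


Section Sub.
Variable Omega : closedFieldType.
Variable R : {pred Omega}.
Hypothesis HR : is_subring R.
Lemma subR_closed : subring_closed R.
Proof. by case: HR => h1 h2 h3; split. Qed.
HB.instance Definition _ := GRing.isSubringClosed.Build Omega R subR_closed.

Lemma pdiv_R (f g : {poly Omega}) : f \is a polyOver R -> g \is a polyOver R ->
  g != 0 -> exists k d r, [/\ d \is a polyOver R, r \is a polyOver R,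
    lead_coef g ^+ k *: f = d * g + r & (size r < size g)%N].
Proof.
move=> + Rg g0; elim: {f}(size f) {-2}f (leqnn (size f)) => [|n IH] f sf Rf.
  exists 0%N, 0, f; split => //; first exact: rpred0.
    by rewrite expr0 scale1r mul0r add0r.
  by rewrite (leq_ltn_trans sf) // lt0n size_poly_eq0.
case: (ltnP (size f) (size g)) => [lt|ge].
  exists 0%N, 0, f; split => //; first exact: rpred0.
  by rewrite expr0 scale1r mul0r add0r.
have f0 : f != 0 by rewrite -size_poly_eq0 -lt0n (leq_trans _ ge) // lt0n size_poly_eq0.
set m := (size f - size g)%N.
set f1 := lead_coef g *: f - (lead_coef f *: 'X^m) * g.
have Rlg : lead_coef g \in R by apply: (polyOverP Rg).
have Rlf : lead_coef f \in R by apply: (polyOverP Rf).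
have Rf1 : f1 \is a polyOver R.
  by rewrite rpredB ?rpredM ?polyOverZ ?polyOverXn.
have sf1 : (size f1 <= n)%N.
  have sg0 : (0 < size g)%N by rewrite lt0n size_poly_eq0.
  apply/leq_sizeP => j hj.
  rewrite coefB coefZ -scalerAl coefZ coefXnM.
  case: (ltnP (size f) j.+1) => hj2.
    have -> : f`_j = 0 by apply/(leq_sizeP _ _ (leqnn (size f))); rewrite -ltnS.
    rewrite mulr0.
    have hm : (m <= j)%N by rewrite /m (leq_trans (leq_subr _ _)) // -ltnS.
    rewrite ltnNge hm /=.
    have -> : g`_(j - m) = 0.
      apply/(leq_sizeP _ _ (leqnn (size g))).
      rewrite /m; lia.
    by rewrite mulr0 subr0.
  have ej : j = n by apply/eqP; rewrite eqn_leq hj -ltnS (leq_trans hj2 sf).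
  have esf : size f = n.+1 by apply/eqP; rewrite eqn_leq sf -ej.
  have hm : (m <= j)%N by rewrite /m; lia.
  rewrite ltnNge hm /=.
  have -> : (j - m)%N = (size g).-1.
    by rewrite /m; lia.
  by rewrite /lead_coef esf ej /= mulrC subrr.
have [k [d [r [Rd Rr e sr]]]] := IH f1 sf1 Rf1.
exists k.+1, (d + lead_coef g ^+ k *: (lead_coef f *: 'X^m)), r; split => //.
  by rewrite rpredD // polyOverZ ?rpredX // polyOverZ // polyOverXn.
rewrite exprSr -scalerA mulrDl addrAC -e /f1 scalerBr scalerA.
by rewrite -!scalerAl subrK.
Qed.
End Sub.


Lemma minimal_ex (P : nat -> Prop) n : P n -> exists m, P m /\ forall k, P k -> (m <= k)%N.
Proof.
elim: n {-2}n (leqnn n) => [|N IH] n hn Pn.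
  by exists n; split=> // k _; move: hn; rewrite leqn0 => /eqP ->.
case: (classic (exists k, (k < n)%N /\ P k)) => [[k [hk Pk]]|nk].
  by apply: (IH k) => //; rewrite -ltnS (leq_trans hk).
exists n; split=> // k Pk; rewrite leqNgt; apply/negP => hk; apply: nk; by exists k.
Qed.

Lemma natL1 a b c : (0 < a)%N -> (a + b - 1 < c)%N -> (b < c)%N.
Proof. lia. Qed.
Lemma natL2 a b : (1 < b)%N -> (a + b - 1 <= a)%N -> False.
Proof. lia. Qed.

Section Sep.
Variable Omega : closedFieldType.
Variable R : {pred Omega}.
Hypothesis HR : is_subring R.
HB.instance Definition _ := GRing.isSubringClosed.Build Omega R (@subR_closed Omega R HR).

Definition minR (y : Omega) (g : {poly Omega}) :=
  [/\ g \is a polyOver R, g != 0, root g y &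
   forall h, h \is a polyOver R -> h != 0 -> root h y -> (size g <= size h)%N].

Lemma minR_ex y h : h \is a polyOver R -> h != 0 -> root h y -> exists g, minR y g.
Proof.
move=> Rh h0 hy.
have [m [[g [Rg g0 gy sg]] hm]] := @minimal_ex
  (fun n => exists g, [/\ g \is a polyOver R, g != 0, root g y & size g = n])
  (size h) (ex_intro _ h (And4 Rh h0 hy erefl)).
exists g; split => // h' Rh' h0' hy'; rewrite sg; apply: hm; by exists h'.
Qed.

Lemma minR_div y g h : minR y g -> h \is a polyOver R -> root h y ->
  exists k d, d \is a polyOver R /\ lead_coef g ^+ k *: h = d * g.
Proof.
move=> [Rg g0 gy gm] Rh hy.
have [k [d [r [Rd Rr e sr]]]] := @pdiv_R Omega R HR _ _ Rh Rg g0.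
exists k, d; split => //.
have r0 : r = 0.
  apply/eqP; apply: contraTT sr => r0; rewrite -leqNgt; apply: gm => //.
  have : (lead_coef g ^+ k *: h).[y] = (d * g + r).[y] by rewrite e.
  rewrite hornerZ hornerD hornerM (eqP hy) (eqP gy) !mulr0 add0r => ry.
  by rewrite /root -ry.
by rewrite e r0 addr0.
Qed.

Lemma minR_sep y g : minR y g -> g^`() != 0 -> separable_poly g.
Proof.
move=> mg; have [Rg g0 gy gm] := mg => d0.
rewrite separable_poly.unlock coprimep_def; apply/negPn/negP => nc.
have [z hz] := closed_rootP _ nc.
have gz : root g z by apply: root_dvdp hz; apply: dvdp_gcdl.
have dz : root g^`() z by apply: root_dvdp hz; apply: dvdp_gcdr.
have Rd : g^`() \is a polyOver R by apply: polyOver_deriv.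
have [g2 mg2] := @minR_ex z g Rg g0 gz.
have [Rg2 g20 g2z _] := mg2.
have lc0 : lead_coef g2 != 0 by rewrite lead_coef_eq0.
have [k [d [Rd1 e1]]] := minR_div mg2 Rg gz.
have [k' [d' [Rd' e2]]] := minR_div mg2 Rd dz.
have s2 : (size g2 < size g)%N.
  have : lead_coef g2 ^+ k' *: g^`() != 0 by rewrite scaler_eq0 negb_or expf_eq0 (negbTE lc0) andbF.
  rewrite e2 => h0.
  have d'0 : d' != 0 by apply: contraNneq h0 => ->; rewrite mul0r.
  have := lt_size_deriv g0.
  have : size (lead_coef g2 ^+ k' *: g^`()) = size g^`() by rewrite size_scale // expf_neq0.
  rewrite e2 size_mul // -subn1 => <-.
  have : (0 < size d')%N by rewrite lt0n size_poly_eq0.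
  by move=> h1 h2; apply: (natL1 h1).
have sg2 := root_size_gt1 g20 g2z.
have : (lead_coef g2 ^+ k *: g).[y] = 0 by rewrite hornerZ (eqP gy) mulr0.
rewrite e1 hornerM => /eqP; rewrite mulf_eq0 => /orP [dy|g2y].
  have d10 : d != 0.
    apply: contraTneq isT => d00.
    have : lead_coef g2 ^+ k *: g = 0 by rewrite e1 d00 mul0r.
    by move/eqP; rewrite scaler_eq0 expf_eq0 (negbTE lc0) andbF (negbTE g0).
  have := gm d Rd1 d10 dy.
  have : size (lead_coef g2 ^+ k *: g) = size g by rewrite size_scale // expf_neq0.
  rewrite e1 size_mul // -subn1 => <-.
  by move=> h; case: (natL2 sg2 h).
have := gm g2 Rg2 g20 g2y => h; move: (leq_trans s2 h); by rewrite ltnn.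
Qed.
End Sep.


Section Int.
Variable Omega : closedFieldType.
Variable R S : {pred Omega}.
Hypothesis HR : is_subring R.
Hypothesis HS : is_subring S.
HB.instance Definition _ := GRing.isSubringClosed.Build Omega R (@subR_closed Omega R HR).
HB.instance Definition _ := GRing.isSubringClosed.Build Omega S (@subR_closed Omega S HS).
Hypothesis RS : {subset R <= S}.
Hypothesis FG : fin_gen R S.

Lemma det0_ker n (M : 'M[Omega]_n) (v : 'cV_n) : M *m v = 0 -> v != 0 -> \det M = 0.
Proof.
move=> Mv v0; apply/eqP; apply: contraNT v0 => d0.
have uM : M \in unitmx by rewrite unitmxE unitfE.
by rewrite -(mulKmx uM v) Mv mulmx0.
Qed.

Lemma charR n (A : 'M[Omega]_n) : (forall i j, A i j \in R) -> char_poly A \is a polyOver R.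
Proof.
move=> AR; rewrite /char_poly /determinant.
apply: rpred_sum => sg _; apply: rpredM.
  by apply: rpredX; rewrite rpredN rpred1.
apply: rpred_prod => i _; rewrite !mxE.
by apply: rpredB; [apply: rpredMn; apply: polyOverX | rewrite polyOverC].
Qed.

Lemma integral s : s \in S -> exists P, [/\ P \is monic, P \is a polyOver R & root P s].
Proof.
move=> Ss; have [s0 [sub span]] := FG.
set n := size s0.
have: forall i : 'I_n, exists r : 'I_n -> Omega,
    (forall j, r j \in R) /\ s * s0`_i = \sum_(j < n) r j * s0`_j.
  move=> i; apply: span; apply: rpredM => //; apply: sub; exact: mem_nth.
case/fin_all_exists => r hr.
set A := \matrix_(i, j) r i j.
have AR : forall i j, A i j \in R by move=> i j; rewrite mxE; case: (hr i).
exists (char_poly A); split; [exact: char_poly_monic | exact: charR |].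
set v : 'cV_n := \col_i s0`_i.
have v0 : v != 0.
  apply/negP => /eqP v0.
  have [r1 [_ e1]] := span 1 (rpred1 _).
  have : (1 : Omega) = 0.
    rewrite e1 big1 // => j _.
    have -> : s0`_j = v j 0 by rewrite mxE.
    by rewrite v0 mxE mulr0.
  by move/eqP; rewrite oner_eq0.
have Mv : (s%:M - A) *m v = 0.
  apply/matrixP => i k; rewrite !mxE ord1.
  rewrite (eq_bigr (fun j => (s%:M i j) * v j 0 - A i j * v j 0)); last first.
    by move=> j _; rewrite !mxE mulrBl.
  rewrite sumrB.
  have -> : \sum_j s%:M i j * v j 0 = s * s0`_i.
    rewrite (bigD1 i) //= big1 ?addr0; first by rewrite !mxE eqxx mulr1n.
    by move=> j ji; rewrite !mxE eq_sym (negbTE ji) mulr0n mul0r.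
  case: (hr i) => _ ->; apply/eqP; rewrite subr_eq0; apply/eqP; apply: eq_bigr => j _.
  by rewrite !mxE.
apply/eqP.
have := det0_ker Mv v0.
rewrite -horner_evalE /char_poly -det_map_mx => <-; congr (\det _).
apply/matrixP => i j; rewrite !mxE.
by rewrite /= horner_evalE hornerD hornerN hornerMn hornerX hornerC.
Qed.
End Int.


Section Alg.
Variable Omega : closedFieldType.
Variable R S : {pred Omega}.
Hypothesis HR : is_subring R.
Hypothesis HS : is_subring S.
HB.instance Definition _ := GRing.isSubringClosed.Build Omega R (@subR_closed Omega R HR).
HB.instance Definition _ := GRing.isSubringClosed.Build Omega S (@subR_closed Omega S HS).
Hypothesis RS : {subset R <= S}.
Hypothesis FG : fin_gen R S.

Lemma split0 (Q : {poly Omega}) : Q = (Q`_0)%:P + drop_poly 1 Q * 'X.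
Proof.
apply/polyP => i; rewrite coefD coefC coefMX coef_drop_poly.
by case: i => [|i]; rewrite /= ?addr0 ?add0r // addn1.
Qed.

Lemma alg_frac y : fracf S y -> exists h, [/\ h \is a polyOver R, h != 0 & root h y].
Proof.
case=> a [b [Sa Sb b0 ->]].
have [Pb [mPb RPb rPb]] := integral HR HS FG Sb.
have Pb0 : Pb != 0 by apply: monic_neq0.
have [Q [RQ Q0 Qb Qm]] := minR_ex RPb Pb0 rPb.
set T := drop_poly 1 Q.
have RT : T \is a polyOver R.
  by apply/polyOverP => i; rewrite coef_drop_poly; apply: (polyOverP RQ).
have eQb : Q`_0 + T.[b] * b = 0.
  by move: Qb => /eqP; rewrite {1}[Q]split0 hornerD hornerC hornerMX.
have q0 : Q`_0 != 0.
  apply/negP => /eqP q0; move: eQb; rewrite q0 add0r => /eqP.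
  rewrite mulf_eq0 (negbTE b0) orbF => Tb.
  have T0 : T != 0.
    apply: contraNneq Q0 => T0; rewrite [Q]split0 -/T T0 q0 mul0r addr0.
    by rewrite polyC0.
  have := Qm T RT T0 Tb.
  rewrite /T size_drop_poly.
  have : (0 < size Q)%N by rewrite lt0n size_poly_eq0.
  by move=> h1 h2; move: (leq_trans h2 (leq_subr 1 (size Q))); lia.
set s' := - (T.[b] * a).
have Ss' : s' \in S.
  rewrite rpredN rpredM //; apply: rpred_horner => //.
  exact: polyOverS RT.
have [P [mP RP rP]] := integral HR HS FG Ss'.
have RQ0 : Q`_0 \in R by apply: (polyOverP RQ).
have sX : size (Q`_0 *: ('X : {poly Omega})) = 2 by rewrite size_scale // size_polyX.
exists (P \Po (Q`_0 *: 'X)); split.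
- by apply: polyOver_comp => //; rewrite polyOverZ // polyOverX.
- by rewrite comp_poly2_eq0 // monic_neq0.
rewrite root_comp hornerZ hornerX.
have -> : Q`_0 * (a / b) = s'.
  have -> : Q`_0 = - (T.[b] * b) by apply/eqP; rewrite -addr_eq0 eQb.
  by rewrite /s' mulNr; congr (- _); field.
exact: rP.
Qed.
End Alg.


Lemma sumfrac (F : fieldType) (a b : F) m (c : nat -> F) : b != 0 ->
  b ^+ m * \sum_(j < m.+1) c j * (a / b) ^+ j =
  \sum_(j < m.+1) c j * (a ^+ j * b ^+ (m - j)).
Proof.
move=> b0; rewrite mulr_sumr; apply: eq_bigr => -[j hj] _ /=.
rewrite mulrCA; congr (_ * _).
have -> : b ^+ m = b ^+ (m - j) * b ^+ j by rewrite -exprD subnK // -ltnS.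
rewrite expr_div_n; field; exact: expf_neq0.
Qed.


Section Main.
Variable Omega : closedFieldType.
Variables (p e : nat) (R S : {pred Omega}).
Hypothesis hp : p \in [pchar Omega].
Hypothesis HR : is_subring R.
Hypothesis HS : is_subring S.
HB.instance Definition _ := GRing.isSubringClosed.Build Omega R (@subR_closed Omega R HR).
HB.instance Definition _ := GRing.isSubringClosed.Build Omega S (@subR_closed Omega S HS).
Hypothesis RS : {subset R <= S}.
Hypothesis e0 : (0 < e)%N.
Local Notation q := (p ^ e)%N.

Lemma prp : prime p. Proof. exact: pcharf_prime hp. Qed.
Lemma p1 : (1 < p)%N. Proof. exact: prime_gt1 prp. Qed.
Lemma q0 : (0 < q)%N. Proof. by rewrite expn_gt0 ltnW // p1. Qed.

Lemma frobD (u v : Omega) k : (u + v) ^+ (p ^ k) = u ^+ (p ^ k) + v ^+ (p ^ k).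
Proof.
elim: k => [|k IH]; first by rewrite expn0 !expr1.
rewrite expnSr !exprM IH -(pFrobenius_autE hp) rmorphD /=.
by [].
Qed.

Lemma frob_sum n (F : 'I_n -> Omega) : (\sum_(j < n) F j) ^+ p = \sum_(j < n) F j ^+ p.
Proof.
rewrite -(pFrobenius_autE hp) rmorph_sum; apply: eq_bigr => j _.
by [].
Qed.

Lemma rootD (T : {pred Omega}) (HT : is_subring T) u v :
  u \in root_ring q T -> v \in root_ring q T -> u + v \in root_ring q T.
Proof.
rewrite !inE frobD => hu hv.
case: HT => h1 h2 h3; rewrite -[v ^+ _]opprK.
apply: (h2) => //; rewrite -[- _]add0r; apply: (h2) => //.
by rewrite -(subrr 1); apply: (h2).
Qed.

Lemma rootM (T : {pred Omega}) (HT : is_subring T) u v :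
  u \in T -> v \in root_ring q T -> u * v \in root_ring q T.
Proof.
rewrite !inE exprMn => hu hv; case: HT => h1 h2 h3; apply: (h3) => //.
elim: q => [|k IH]; first by rewrite expr0.
by rewrite exprS; apply: (h3).
Qed.

Lemma rootRS u : u \in root_ring q R -> u \in root_ring q S.
Proof. by rewrite !inE; apply: RS. Qed.

Variable phib : Omega -> Omega.
Hypothesis hb1 : forall x y : Omega, x \in root_ring q S ->
  y \in root_ring q S -> phib (x + y) = phib x + phib y.
Hypothesis hb2 : forall r x : Omega, r \in S -> x \in root_ring q S ->
  phib (r * x) = r * phib x.

Lemma phib0 : phib 0 = 0.
Proof.
have z : 0 \in root_ring q S by rewrite inE expr0n eqn0Ngt q0 /= rpred0.
have := hb1 z z; rewrite addr0 => e1.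
by move/(congr1 (fun w => w - phib 0)): e1; rewrite subrr addrK.
Qed.

Lemma phib_sum n (s t : nat -> Omega) : (forall j, s j \in S) ->
  (forall j, t j \in root_ring q S) ->
  phib (\sum_(j < n) s j * t j) = \sum_(j < n) s j * phib (t j) /\
  \sum_(j < n) s j * t j \in root_ring q S.
Proof.
move=> hs ht; elim: n => [|n [IH1 IH2]].
  by rewrite !big_ord0 phib0; split => //; rewrite inE expr0n eqn0Ngt q0 /= rpred0.
have hm : s n * t n \in root_ring q S by apply: rootM.
rewrite !big_ord_recr /= hb1 // IH1 hb2 //; split => //.
exact: rootD.
Qed.
Hypothesis FG : fin_gen R S.
Hypothesis nsep : ~ separable_ext (fracf R) (fracf S).
Variable phi : Omega -> Omega.
Hypothesis h2 : forall r x : Omega, r \in R -> x \in root_ring q R ->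
  phi (r * x) = r * phi x.
Hypothesis h3 : forall x : Omega, x \in root_ring q R -> phi x \in R.
Hypothesis ext : forall x : Omega, x \in root_ring q R -> phib x = phi x.

Lemma core x0 : x0 \in root_ring q R -> phi x0 = 0.
Proof.
move=> Rx0.
have [y [Ly ny]] : exists y, fracf S y /\ ~ separable_elt (fracf R) y.
  apply: NNPP => nex; apply: nsep => y Ly; apply: NNPP => ns; apply: nex; by exists y.
have [h [Rh h0 hy]] := alg_frac HR HS RS FG Ly.
have [g mg] := minR_ex Rh h0 hy.
have [Rg g0 gy gm] := mg.
have dg0 : g^`() = 0.
  case: (eqVneq g^`() 0) => // d0; exfalso; apply: ny; exists g; split => //.
  - by move=> i; exists g`_i, 1; split; [exact: (polyOverP Rg) | by case: (HR) | exact: oner_neq0 | rewrite divr1].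
  - exact: minR_sep mg d0.
case: Ly => a [b [Sa Sb b0 ey]].
have sg := root_size_gt1 g0 gy.
have gcoef : forall i, ~~ (p %| i)%N -> g`_i = 0.
  case=> [|k]; first by rewrite dvdn0.
  rewrite (dvdn_pcharf hp) => nk.
  have : g^`()`_k = 0 by rewrite dg0 coef0.
  rewrite coef_deriv -mulr_natr => /eqP; rewrite mulf_eq0 (negbTE nk) orbF.
  by move/eqP.
set N := (size g).-1.
have lg0 : g`_N != 0 by rewrite -lead_coefE lead_coef_eq0.
have pN : (p %| N)%N by apply: contraR lg0 => /gcoef ->; rewrite eqxx.
set m := (N %/ p)%N.
have eN : N = (m * p)%N by rewrite divnK.
have m0 : (0 < m)%N.
  have : (0 < N)%N by rewrite /N -subn1 subn_gt0.
  by rewrite eN muln_gt0 => /andP[].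

have p0 : (0 < p)%N by rewrite ltnW // p1.
set G := \poly_(j < m.+1) g`_(j * p).
have gG : g = G \Po 'X^p.
  apply/polyP => i; rewrite coef_comp_poly_Xn // coef_poly.
  case: ifP => [pi|/negbT pi]; last by rewrite gcoef.
  case: ltnP => hi; first by rewrite divnK.
  apply/(leq_sizeP _ _ (leqnn (size g))).
  have : (size g = N.+1)%N by rewrite /N prednK // ltnW.
  move=> ->; rewrite eN -(divnK pi) ltn_mul2r p0 /=.
  by [].
have ex_root : forall c : Omega, exists z : Omega, z ^+ p == c.
  move=> c; have : size ('X^p - c%:P : {poly Omega}) != 1.
    by rewrite size_XnsubC // eqSS -lt0n.
  case/closed_rootP => z; rewrite /root hornerD hornerN hornerXn hornerC subr_eq0.
  by exists z.
pose al j := xchoose (ex_root (g`_(j * p))).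
have alP : forall j, al j ^+ p = g`_(j * p) by move=> j; apply/eqP; exact: (xchooseP (ex_root (g`_(j * p)))).

have Z0 : \sum_(j < m.+1) al j * (a / b) ^+ j = 0.
  have : (\sum_(j < m.+1) al j * (a / b) ^+ j) ^+ p == 0.
    rewrite frob_sum.
    rewrite (eq_bigr (fun j : 'I_m.+1 => g`_(j * p) * ((a / b) ^+ p) ^+ j)); last first.
      by move=> j _; rewrite exprMn alP exprAC.
    by rewrite -(horner_poly m.+1 (fun j => g`_(j * p))) -/G -hornerXn -horner_comp -gG -ey (eqP gy).
  by rewrite expf_eq0 p0 => /eqP.
have Z0' : \sum_(j < m.+1) al j * (a ^+ j * b ^+ (m - j)) = 0.
  by rewrite -sumfrac // Z0 mulr0.
have qE : q = (p * p ^ e.-1)%N by rewrite -expnS prednK.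
have alR : forall j x, x \in root_ring q R -> al j * x \in root_ring q R.
  move=> j x; rewrite !inE exprMn => Rx; apply: rpredM => //.
  by rewrite qE exprM alP; apply: rpredX; apply: (polyOverP Rg).

have sgE : size g = (m * p).+1 by rewrite -eN /N prednK // ltnW.
have key : forall x, x \in root_ring q R -> phi (al m * x) = 0.
  move=> x Rx.
  have [e1 _] := @phib_sum m.+1 (fun j => a ^+ j * b ^+ (m - j)) (fun j => al j * x)
    (fun j => rpredM (rpredX _ Sa) (rpredX _ Sb)) (fun j => rootRS (alR j x Rx)).
  have es : \sum_(j < m.+1) a ^+ j * b ^+ (m - j) * (al j * x) = 0.
    rewrite -[RHS](mul0r x) -{2}Z0' mulr_suml; apply: eq_bigr => j _.
    by rewrite mulrCA mulrA.
  move: e1; rewrite es phib0 => e1.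
  set H := \poly_(j < m.+1) phi (al j * x).
  have RH : H \is a polyOver R.
    apply/polyOverP => i; rewrite coef_poly; case: ifP => _; last exact: rpred0.
    by apply: h3; apply: alR.
  have Hr : root H (a / b).
    rewrite /root horner_poly.
    have : b ^+ m * \sum_(j < m.+1) phi (al j * x) * (a / b) ^+ j = 0.
      rewrite (@sumfrac _ a b m (fun j => phi (al j * x)) b0) [RHS]e1; apply: eq_bigr => j _.
      by rewrite ext ?alR // mulrC.
    by move/eqP; rewrite mulf_eq0 expf_eq0 (negbTE b0) andbF.
  case: (eqVneq H 0) => [H0|H0].
    by have := coef_poly m.+1 (fun j => phi (al j * x)) m; rewrite -/H H0 coef0 ltnSn.
  have Hr' : root H y by rewrite ey.
  have := gm H RH H0 Hr'.
  move=> hs; have := leq_trans hs (size_poly _ _); rewrite sgE ltnS.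
  move=> hm; exfalso; move: hm; rewrite leqNgt ltn_Pmulr //; exact: p1.
have aln : al m != 0.
  apply: contraNneq lg0 => a0; rewrite eN -alP a0 expr0n.
  by rewrite eqn0Ngt p0.
have x1R : al m ^+ q.-1 * x0 \in root_ring q R.
  move: Rx0; rewrite !inE exprMn exprAC => Rx0'; apply: rpredM => //.
  apply: rpredX; rewrite qE exprM alP; apply: rpredX; apply: (polyOverP Rg).
have := key _ x1R; rewrite mulrA -exprS prednK ?q0 // h2 //; last first.
  rewrite qE exprM alP; apply: rpredX; apply: (polyOverP Rg).
by move/eqP; rewrite mulf_eq0 expf_eq0 (negbTE aln) andbF => /eqP.
Qed.
End Main.

Theorem proposition5p2 (Omega : closedFieldType) (p e : nat)
    (R S : {pred Omega}) :
  p \in [pchar Omega] ->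
  is_subring R -> is_subring S -> {subset R <= S} ->
  normal_domain R -> normal_domain S ->
  F_finite p R -> F_finite p S ->
  fin_gen R S ->
  ~ separable_ext (fracf R) (fracf S) ->
  (0 < e)%N ->
  forall phi : Omega -> Omega,
    is_hom R (root_ring (p ^ e) R) R phi ->
    (exists phibar : Omega -> Omega,
        is_hom S (root_ring (p ^ e) S) S phibar /\
        (forall x, x \in root_ring (p ^ e) R -> phibar x = phi x)) ->
  forall x, x \in root_ring (p ^ e) R -> phi x = 0.
Proof.
move=> hp HR HS RS _ _ _ _ FG nsep e0 phi [h1 h2 h3] [phib [[hb1 hb2 hb3] ext]] x0 Rx0.
exact: (core hp HR HS RS e0 hb1 hb2 FG nsep h2 h3 ext Rx0).
Qed.
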